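(* Let $(E,\mathcal{I}_1),\dots,(E,\mathcal{I}_k)$ be matroids on a common finite ground set $E$ with weight functions $w_i:E\to\mathbb{R}_+$, and let $\mathrm{Op}^{(1)},\mathrm{Op}^{(2)}\in\{\max,\min,\sum\}$. Let $r=\sum_{i\in[k]}\mathrm{rank}(\mathcal{I}_i)-|E|$, assumed nonnegative, and let $D=\{d_1,\dots,d_r\}$ be a set of $r$ new elements with $D\cap E=\emptyset$. For each $i\in[k]$ define $$\mathcal{I}_i'=\{D'\subseteq D\mid |D'|\le \mathrm{rank}(\mathcal{I}_i)-1\},\qquad \overline{\mathcal{I}}_i=\{I\cup D'\mid I\in\mathcal{I}_i,\ D'\in\mathcal{I}_i',\ |I\cup D'|\le \mathrm{rank}(\mathcal{I}_i)\}$$ (so $(E\cup D,\overline{\mathcal{I}}_i)$ is the $\mathrm{rank}(\mathcal{I}_i)$-truncation of the matroid union of $(E,\mathcal{I}_i)$ and the uniform matroid $(D,\mathcal{I}_i')$), and define $\overline{w}_i:E\cup D\to\mathbb{R}_+$ by $\overline{w}_i(e)=w_i(e)$ for $e\in E$, and for $e\in D$: $\overline{w}_i(e)=\min_{e'\in E}w_i(e')$ if $\mathrm{Op}^{(2)}=\max$, $\overline{w}_i(e)=\max_{e'\in E}w_i(e')$ if $\mathrm{Op}^{(2)}=\min$, and $\overline{w}_i(e)=0$ if $\mathrm{Op}^{(2)}=\sum$. Then the minimum $(\mathrm{Op}^{(1)},\mathrm{Op}^{(2)})$-value over feasible partitions of $E$ with respect to $(\mathcal{I}_i,w_i)_{i\in[k]}$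 equals the minimum $(\mathrm{Op}^{(1)},\mathrm{Op}^{(2)})$-value over feasible partitions of $E\cup D$ with respect to $(\overline{\mathcal{I}}_i,\overline{w}_i)_{i\in[k]}$.
   Context: For matroids $(E,\mathcal{I}_i)$, $i\in[k]=\{1,\dots,k\}$, a feasible partition of $E$ is a tuple $(I_1,\dots,I_k)$ of pairwise disjoint sets with $\bigcup_i I_i=E$, $I_i\neq\emptyset$ and $I_i\in\mathcal{I}_i$ for all $i$. For weights $w_i$, the $(\mathrm{Op}^{(1)},\mathrm{Op}^{(2)})$-value of a partition $(I_1,\dots,I_k)$ is $\mathrm{Op}^{(1)}_{i\in[k]}\mathrm{Op}^{(2)}_{e\in I_i}w_i(e)$ (e.g. the $(\sum,\max)$-value is $\sum_{i}\max_{e\in I_i}w_i(e)$). $\mathrm{rank}(\mathcal{I})$ denotes the common size of the bases of the matroid. Note $r\ge 0$ whenever $E$ has a feasible partition. *)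

(* Defs.v *)
From HB Require Import structures.
From mathcomp Require Import all_boot all_order all_algebra.
From mathcomp Require Import reals.
Set Implicit Arguments. Unset Strict Implicit. Unset Printing Implicit Defensive.
Import Order.TTheory GRing.Theory Num.Theory.
Local Open Scope ring_scope.

Section Matroids.
Variable T : finType.

Definition is_matroid (E : {set T}) (Ind : {set T} -> bool) : Prop :=
  [/\ forall S : {set T}, Ind S -> S \subset E,
      Ind set0,
      forall A B : {set T}, B \subset A -> Ind A -> Ind B
    & forall A B : {set T}, Ind A -> Ind B -> (#|A| < #|B|)%N ->
        exists2 x, x \in B :\: A & Ind (x |: A)].

Definition is_basis (Ind : {set T} -> bool) (B : {set T}) : Prop :=
  Ind B /\ forall S : {set T}, Ind S -> B \subset S -> S = B.

Definition mrank (Ind : {set T} -> bool) : nat :=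
  \max_(S : {set T} | Ind S) #|S|.
End Matroids.

Inductive Op := OMax | OMin | OSum.

Section Values.
Variable R : realType.

Definition opfun (o : Op) : R -> R -> R :=
  match o with OMax => Num.max | OMin => Num.min | OSum => +%R end.

(* Op applied to a finite (nonempty) list of reals; the empty list gets 0
   (only relevant in degenerate cases). *)
Definition opseq (o : Op) (s : seq R) : R :=
  match s with
  | [::] => 0
  | x :: s' => foldr (opfun o) x s'
  end.

Variable T : finType.
Variable k : nat.

Definition feasible_partition (X : {set T}) (Ind : 'I_k -> {set T} -> bool)
    (P : 'I_k -> {set T}) : Prop :=
  [/\ forall i j, i != j -> [disjoint P i & P j],
      \bigcup_(i < k) P i = X,
      forall i, P i != set0
    & forall i, Ind i (P i)].

Definition pvalue (o1 o2 : Op) (w : 'I_k -> T -> R) (P : 'I_k -> {set T}) : R :=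
  opseq o1 [seq opseq o2 [seq w i e | e <- enum (P i)] | i <- enum 'I_k].

Definition is_min_value (o1 o2 : Op) (X : {set T})
    (Ind : 'I_k -> {set T} -> bool) (w : 'I_k -> T -> R) (v : R) : Prop :=
  (exists2 P, feasible_partition X Ind P & pvalue o1 o2 w P = v) /\
  (forall P, feasible_partition X Ind P -> v <= pvalue o1 o2 w P).

(* The extended matroids  \bar I_i  on E \cup D :
   I'_i = {D' \subseteq D | |D'| <= rank(I_i) - 1}  (integer arithmetic, i.e.
   |D'| < rank(I_i)), and
   \bar I_i = {I \cup D' | I in I_i, D' in I'_i, |I \cup D'| <= rank(I_i)}. *)
Definition ext_ind (D : {set T}) (Ind : 'I_k -> {set T} -> bool)
    (i : 'I_k) (S : {set T}) : bool :=
  [exists I : {set T}, exists D' : {set T},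
    [&& Ind i I, D' \subset D, (#|D'| < mrank (Ind i))%N,
        S == I :|: D' & (#|I :|: D'| <= mrank (Ind i))%N]].

Definition dummy_weight (o2 : Op) (E : {set T}) (wi : T -> R) : R :=
  match o2 with
  | OMax => opseq OMin [seq wi e | e <- enum E]
  | OMin => opseq OMax [seq wi e | e <- enum E]
  | OSum => 0
  end.

Definition ext_weight (o2 : Op) (E D : {set T}) (w : 'I_k -> T -> R)
    (i : 'I_k) (e : T) : R :=
  if e \in D then dummy_weight o2 E (w i) else w i e.
End Values.

(* Main.v *)
Require Import Defs.
From HB Require Import structures.
From mathcomp Require Import all_boot all_order all_algebra.
From mathcomp Require Import reals zify.
From Stdlib Require Import Lia.
Set Implicit Arguments. Unset Strict Implicit. Unset Printing Implicit Defensive.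
Import Order.TTheory GRing.Theory Num.Theory.
Local Open Scope ring_scope.

Section Op.
Variable R : realType.

Lemma foldr_max (x : R) s : foldr Num.max x s \in x :: s /\
  forall y, y \in x :: s -> y <= foldr Num.max x s.
Proof.
elim: s => [|a s [IH1 IH2]] /=.
  by split; [rewrite inE | move=> y; rewrite inE => /eqP ->].
rewrite maxEle; case: ifP => H.
  split; first by move: IH1; rewrite !inE => /orP [->|->]; rewrite ?orbT.
  move=> y; rewrite !inE => /or3P [/eqP->|/eqP->|Hy]; last by apply: IH2; rewrite inE Hy orbT.
  - by apply: IH2; rewrite inE eqxx.
  - done.
split; first by rewrite !inE eqxx orbT.
have Ha : foldr Num.max x s <= a by move/negbT: H; rewrite -ltNge => /ltW.
move=> y; rewrite !inE => /or3P [/eqP->|/eqP->|Hy] //.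
- by apply: le_trans Ha; apply: IH2; rewrite inE eqxx.
- by apply: le_trans Ha; apply: IH2; rewrite inE Hy orbT.
Qed.

Lemma foldr_min (x : R) s : foldr Num.min x s \in x :: s /\
  forall y, y \in x :: s -> foldr Num.min x s <= y.
Proof.
elim: s => [|a s [IH1 IH2]] /=.
  by split; [rewrite inE | move=> y; rewrite inE => /eqP ->].
rewrite minEle; case: ifP => H.
  split; first by rewrite !inE eqxx orbT.
  move=> y; rewrite !inE => /or3P [/eqP->|/eqP->|Hy] //.
  - by apply: le_trans H _; apply: IH2; rewrite inE eqxx.
  - by apply: le_trans H _; apply: IH2; rewrite inE Hy orbT.
split; first by move: IH1; rewrite !inE => /orP [->|->]; rewrite ?orbT.
have Ha : foldr Num.min x s <= a by move/negbT: H; rewrite -ltNge => /ltW.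
move=> y; rewrite !inE => /or3P [/eqP->|/eqP->|Hy] //.
- by apply: IH2; rewrite inE eqxx.
- by apply: IH2; rewrite inE Hy orbT.
Qed.

Lemma opseq_max (s : seq R) : s != [::] ->
  opseq OMax s \in s /\ forall y, y \in s -> y <= opseq OMax s.
Proof. by case: s => // x s _; exact: foldr_max. Qed.

Lemma opseq_min (s : seq R) : s != [::] ->
  opseq OMin s \in s /\ forall y, y \in s -> opseq OMin s <= y.
Proof. by case: s => // x s _; exact: foldr_min. Qed.

Lemma opseq_sum (s : seq R) : opseq OSum s = \sum_(x <- s) x.
Proof.
case: s => [|x s]; first by rewrite big_nil.
rewrite /= big_cons; elim: s => [|a s IH] /=; first by rewrite big_nil addr0.
by rewrite IH big_cons addrCA.
Qed.

Lemma opseq_max_ext (s1 s2 : seq R) : s1 != [::] -> {subset s1 <= s2} ->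
  (forall y, y \in s2 -> exists2 x, x \in s1 & y <= x) ->
  opseq OMax s1 = opseq OMax s2.
Proof.
move=> n1 sub H.
have n2 : s2 != [::].
  case: s1 n1 sub H => // x s1' _ sub' _; move: (sub' x).
  by rewrite inE eqxx => /(_ isT); clear sub'; case: s2.
have [m1 b1] := opseq_max n1; have [m2 b2] := opseq_max n2.
apply/le_anti/andP; split; first by apply: b2; apply: sub.
have [x xin le] := H _ m2; apply: le_trans le _; exact: b1.
Qed.

Lemma opseq_min_ext (s1 s2 : seq R) : s1 != [::] -> {subset s1 <= s2} ->
  (forall y, y \in s2 -> exists2 x, x \in s1 & x <= y) ->
  opseq OMin s1 = opseq OMin s2.
Proof.
move=> n1 sub H.
have n2 : s2 != [::].
  case: s1 n1 sub H => // x s1' _ sub' _; move: (sub' x).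
  by rewrite inE eqxx => /(_ isT); clear sub'; case: s2.
have [m1 b1] := opseq_min n1; have [m2 b2] := opseq_min n2.
apply/le_anti/andP; split; last by apply: b2; apply: sub.
have [x xin le] := H _ m2; apply: le_trans _ le; exact: b1.
Qed.
End Op.
Section Main.
Variables (R : realType) (T : finType) (k : nat).

Lemma map_nonempty (f : T -> R) (I : {set T}) e0 : e0 \in I ->
  [seq f e | e <- enum I] != [::].
Proof.
move=> He; apply/eqP => H.
have : f e0 \in [seq f e | e <- enum I] by apply: map_f; rewrite mem_enum.
by rewrite H.
Qed.

Lemma val_ext o2 (E D : {set T}) (w : 'I_k -> T -> R) (i : 'I_k) (I D' : {set T}) :
  [disjoint D & E] -> I \subset E -> D' \subset D -> I != set0 ->
  opseq o2 [seq ext_weight o2 E D w i e | e <- enum (I :|: D')] =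
  opseq o2 [seq w i e | e <- enum I].
Proof.
move=> dDE sIE sD'D /set0Pn [e0 e0I].
have notD e : e \in I -> e \notin D.
  move=> eI; apply/negP => eD.
  by move: dDE => /disjointFr /(_ eD); rewrite (subsetP sIE _ eI).
have extI e : e \in I -> ext_weight o2 E D w i e = w i e.
  by move=> eI; rewrite /ext_weight (negbTE (notD _ eI)).
have inID e : e \in I :|: D' -> e \notin D -> e \in I.
  by rewrite in_setU => /orP [//|/(subsetP sD'D) ->].
have e0E : e0 \in E by apply: (subsetP sIE).
have sub : {subset [seq w i e | e <- enum I] <=
                   [seq ext_weight o2 E D w i e | e <- enum (I :|: D')]}.
  move=> y /mapP [e]; rewrite mem_enum => eI ->; apply/mapP; exists e.
    by rewrite mem_enum in_setU eI.
  by rewrite extI.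
case: o2 sub extI => sub extI.
- apply: esym; apply: opseq_max_ext => //; first exact: map_nonempty e0I.
  move=> y /mapP [e]; rewrite mem_enum => eID ->.
  case eD: (e \in D).
    exists (w i e0); first by apply: map_f; rewrite mem_enum.
    rewrite /ext_weight eD /=.
    have [_ H] := opseq_min (map_nonempty (w i) e0E).
    by apply: H; apply: map_f; rewrite mem_enum.
  have eI := inID _ eID (negbT eD).
  exists (w i e); first by apply: map_f; rewrite mem_enum.
  by rewrite extI.
- apply: esym; apply: opseq_min_ext => //; first exact: map_nonempty e0I.
  move=> y /mapP [e]; rewrite mem_enum => eID ->.
  case eD: (e \in D).
    exists (w i e0); first by apply: map_f; rewrite mem_enum.
    rewrite /ext_weight eD /=.
    have [_ H] := opseq_max (map_nonempty (w i) e0E).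
    by apply: H; apply: map_f; rewrite mem_enum.
  have eI := inID _ eID (negbT eD).
  exists (w i e); first by apply: map_f; rewrite mem_enum.
  by rewrite extI.
- rewrite !opseq_sum !big_map !big_enum /= (bigID (mem I)) /=.
  rewrite [X in _ + X]big1 ?addr0.
    apply: eq_big => e; first by rewrite in_setU; case: (e \in I); case: (e \in D').
    by move=> /andP [_ eI]; rewrite extI.
  move=> e /andP [eID eI]; rewrite /ext_weight.
  have -> : e \in D.
    by move: eID; rewrite in_setU (negbTE eI) => /(subsetP sD'D).
  by [].
Qed.
End Main.
Section Comb.
Variables (T : finType) (k : nat).

Lemma mem_bigcup_seq (F : 'I_k -> {set T}) (s : seq 'I_k) x :
  (x \in \bigcup_(j <- s) F j) = has (fun j => x \in F j) s.
Proof.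
elim: s => [|a s IH]; first by rewrite big_nil in_set0.
by rewrite big_cons in_setU IH.
Qed.

Lemma card_bigcup_seq (F : 'I_k -> {set T}) (s : seq 'I_k) :
  uniq s -> (forall i j, i != j -> [disjoint F i & F j]) ->
  #|\bigcup_(j <- s) F j| = (\sum_(j <- s) #|F j|)%N.
Proof.
move=> + Hd; elim: s => [|a s IH]; first by rewrite !big_nil cards0.
move=> /= /andP [as_ us]; rewrite !big_cons cardsU IH //.
suff -> : #|F a :&: \bigcup_(j <- s) F j| = 0%N by rewrite subn0.
apply/eqP; rewrite cards_eq0; apply/eqP/setP => x.
rewrite in_setI in_set0 mem_bigcup_seq; apply/negP => /andP [xa /hasP [j js xj]].
have aj : a != j by apply: contraNneq as_ => ->.
by move: (Hd _ _ aj) => /disjointFr /(_ xa); rewrite xj.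
Qed.

Lemma card_bigcup_disj (F : 'I_k -> {set T}) :
  (forall i j, i != j -> [disjoint F i & F j]) ->
  #|\bigcup_(i < k) F i| = (\sum_(i < k) #|F i|)%N.
Proof.
move=> Hd; rewrite -!big_enum /=.
exact: card_bigcup_seq (enum_uniq _) Hd.
Qed.

Lemma split_seq (c : 'I_k -> nat) (s : seq 'I_k) (D : {set T}) :
  uniq s -> #|D| = (\sum_(i <- s) c i)%N ->
  exists F : 'I_k -> {set T},
    [/\ forall i, F i \subset D,
        forall i, i \in s -> #|F i| = c i,
        forall i, i \notin s -> F i = set0,
        forall i j, i != j -> [disjoint F i & F j]
      & forall x, x \in D -> exists i, x \in F i].
Proof.
elim: s D => [|a s IH] D.
  move=> _; rewrite big_nil => /eqP; rewrite cards_eq0 => /eqP ->.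
  exists (fun _ => set0); split => //.
  - by move=> i j _; apply: eq_disjoint0 => x; rewrite in_set0.
  - by move=> x; rewrite in_set0.
move=> /= /andP [as_ us]; rewrite big_cons => cD.
set A := [set x in take (c a) (enum D)].
have AD : A \subset D.
  by apply/subsetP => x; rewrite inE => /mem_take; rewrite mem_enum.
have cA : #|A| = c a.
  rewrite cardsE; move/card_uniqP: (take_uniq (c a) (enum_uniq (mem D))) => ->.
  by rewrite size_take -cardE cD; case: ltnP => // H; apply/eqP; rewrite eqn_leq H leq_addr.
have cDA : #|D :\: A| = (\sum_(i <- s) c i)%N.
  by rewrite cardsD (setIidPr AD) cA cD addKn.
have [F' [F'D F'c F'0 F'd F'cov]] := IH _ us cDA.
have F'a : F' a = set0 by apply: F'0.
exists (fun i => if i == a then A else F' i); split.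
- move=> i; case: (i == a) => //; apply: subset_trans (F'D i) _; exact: subsetDl.
- move=> i; rewrite inE; case: eqP => [->|_] //= /F'c //.
- move=> i; rewrite inE negb_or; case: eqP => //= _ /F'0 //.
- have dA j : [disjoint A & F' j].
    apply: disjointWr (F'D j) _; rewrite disjoint_subset; apply/subsetP => x xA.
    by rewrite inE in_setD xA.
  move=> i j ij; case: eqP => ia; case: eqP => ja.
  + by move: ij; rewrite ia ja eqxx.
  + exact: dA.
  + by rewrite disjoint_sym; exact: dA.
  + exact: F'd.
- move=> x xD; case xA: (x \in A); first by exists a; rewrite eqxx.
  have : x \in D :\: A by rewrite in_setD xA xD.
  move=> /F'cov [i xi]; exists i; case: eqP => ia //.
  by move: xi; rewrite ia F'a in_set0.
Qed.

Lemma split_ord (c : 'I_k -> nat) (D : {set T}) :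
  #|D| = (\sum_(i < k) c i)%N ->
  exists F : 'I_k -> {set T},
    [/\ forall i, F i \subset D,
        forall i, #|F i| = c i,
        forall i j, i != j -> [disjoint F i & F j]
      & forall x, x \in D -> exists i, x \in F i].
Proof.
rewrite -big_enum /= => cD.
have [F [H1 H2 _ H4 H5]] := split_seq (enum_uniq _) cD.
by exists F; split => // i; apply: H2; rewrite mem_enum.
Qed.

Lemma sum_eq_le (a b : 'I_k -> nat) :
  (forall i, (a i <= b i)%N) -> (\sum_(i < k) a i = \sum_(i < k) b i)%N ->
  forall i, a i = b i.
Proof.
move=> le eq i; apply/eqP; rewrite eqn_leq le /=; rewrite leqNgt; apply/negP => lt.
move: eq; rewrite (bigD1 i) //= [in RHS](bigD1 i) //=.
have : (\sum_(j < k | j != i) a j <= \sum_(j < k | j != i) b j)%N.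
  by apply: leq_sum => j _.
by move=> H1 H2; have := leq_add lt H1; rewrite addSn H2 ltnn.
Qed.
End Comb.
Lemma disj_mem (T : finType) (A B : {set T}) :
  (forall x, x \in A -> x \in B -> False) -> [disjoint A & B].
Proof.
move=> H; rewrite -setI_eq0; apply/eqP/setP => x; rewrite in_setI in_set0.
by apply/negP => /andP [xA xB]; case: (H x xA xB).
Qed.

Lemma fwd (R : realType) (T : finType) (k : nat)
    (E D : {set T}) (Ind : 'I_k -> {set T} -> bool) (w : 'I_k -> T -> R)
    (o1 o2 : Op) :
  (forall i, is_matroid E (Ind i)) ->
  [disjoint D & E] ->
  #|D| = (\sum_(i < k) mrank (Ind i) - #|E|)%N ->
  forall P, feasible_partition E Ind P ->
  exists2 Q, feasible_partition (E :|: D) (ext_ind D Ind) Q &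
    pvalue o1 o2 (ext_weight o2 E D w) Q = pvalue o1 o2 w P.
Proof.
move=> Hm dDE cD P [Pd Pc Pn PI].
have PE i : P i \subset E by case: (Hm i) => H _ _ _; exact: H _ (PI i).
have Pr i : (#|P i| <= mrank (Ind i))%N.
  by rewrite /mrank; apply: (@leq_bigmax_cond _ (Ind i) (fun S => #|S|)); exact: PI.
have sumP : (\sum_(i < k) #|P i|)%N = #|E| by rewrite -card_bigcup_disj // Pc.
have cs : #|D| = (\sum_(i < k) (mrank (Ind i) - #|P i|))%N.
  by rewrite cD sumnB ?sumP.
have [F [FD Fc Fd Fcov]] := split_ord cs.
have FE i j : [disjoint P i & F j].
  rewrite disjoint_sym; apply: disjointWl (FD j) _; apply: disjointWr (PE i) _; exact: dDE.
exists (fun i => P i :|: F i).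
  split.
  - move=> i j ij; apply: disj_mem => x; rewrite !in_setU => /orP [xi|xi] /orP [xj|xj].
    + by move: (Pd _ _ ij) => /disjointFr /(_ xi); rewrite xj.
    + by move: (FE i j) => /disjointFr /(_ xi); rewrite xj.
    + by move: (FE j i) => /disjointFr /(_ xj); rewrite xi.
    + by move: (Fd _ _ ij) => /disjointFr /(_ xi); rewrite xj.
  - apply/setP => x; rewrite in_setU; apply/bigcupP/orP.
      move=> [i _]; rewrite in_setU => /orP [xi|xi].
        by left; rewrite -Pc; apply/bigcupP; exists i.
      by right; apply: (subsetP (FD i)).
    move=> [xE|xD].
      by move: xE; rewrite -Pc => /bigcupP [i _ xi]; exists i => //; rewrite in_setU xi.
    by have [i xi] := Fcov _ xD; exists i => //; rewrite in_setU xi orbT.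
  - move=> i; have /set0Pn [x xi] := Pn i; apply/set0Pn; exists x; by rewrite in_setU xi.
  - move=> i; apply/existsP; exists (P i); apply/existsP; exists (F i).
    rewrite PI FD eqxx /=.
    have p0 : (0 < #|P i|)%N by rewrite card_gt0; exact: Pn.
    have := Pr i; have := Fc i; have := leq_card_setU (P i) (F i) => -[le _].
    move: le; set a := #|P i :|: F i|; set b := #|P i|; set c := #|F i|.
    move=> le Fci Pri; apply/andP; split; first by rewrite Fci; lia.
    by apply: leq_trans le _; rewrite Fci; lia.
rewrite /pvalue; congr opseq; apply: eq_map => i /=.
exact: val_ext dDE (PE i) (FD i) (Pn i).
Qed.

Lemma bwd (R : realType) (T : finType) (k : nat)
    (E D : {set T}) (Ind : 'I_k -> {set T} -> bool) (w : 'I_k -> T -> R)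
    (o1 o2 : Op) :
  (forall i, is_matroid E (Ind i)) ->
  (#|E| <= \sum_(i < k) mrank (Ind i))%N ->
  [disjoint D & E] ->
  #|D| = (\sum_(i < k) mrank (Ind i) - #|E|)%N ->
  forall Q, feasible_partition (E :|: D) (ext_ind D Ind) Q ->
  exists2 P, feasible_partition E Ind P &
    pvalue o1 o2 w P = pvalue o1 o2 (ext_weight o2 E D w) Q.
Proof.
move=> Hm cEle dDE cD Q [Qd Qc Qn QI].
have Qsub i : Q i \subset E :|: D by rewrite -Qc; apply: (bigcup_sup i).
have Qsplit i : Q i = (Q i :&: E) :|: (Q i :&: D).
  by rewrite -setIUr (setIidPl (Qsub i)).
have Qwit i : exists (I : {set T}) (D' : {set T}), [/\ Ind i I, D' \subset D, (#|D'| < mrank (Ind i))%N,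
     Q i = I :|: D' & (#|I :|: D'| <= mrank (Ind i))%N].
  move: (QI i) => /existsP [I /existsP [D' /and5P [H1 H2 H3 /eqP H4 H5]]].
  by exists I, D'.
have Qle i : (#|Q i| <= mrank (Ind i))%N.
  by have [I [D' [_ _ _ -> ->]]] := Qwit i.
have Qcard : forall i, #|Q i| = mrank (Ind i).
  apply: sum_eq_le => //.
  rewrite -card_bigcup_disj // Qc cardsU.
  have -> : E :&: D = set0.
    by apply/eqP; rewrite setI_eq0 disjoint_sym.
  by rewrite cards0 subn0 cD subnKC.
have Pgood i : Ind i (Q i :&: E) /\ Q i :&: E != set0.
  have [I [D' [H1 H2 H3 H4 H5]]] := Qwit i.
  have IE : I \subset E by case: (Hm i) => H _ _ _; exact: H _ H1.
  have D'E : D' :&: E = set0.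
    by apply/eqP; rewrite setI_eq0; apply: disjointWl H2 dDE.
  have QE : Q i :&: E = I by rewrite H4 setIUl (setIidPl IE) D'E setU0.
  rewrite QE; split => //; rewrite -card_gt0.
  have := Qcard i; rewrite H4 => Hc.
  have := leq_card_setU I D' => -[le _]; move: le; rewrite Hc.
  move: H3; set a := mrank (Ind i); set b := #|I|; set c := #|D'|; lia.
exists (fun i => Q i :&: E).
  split.
  - move=> i j ij; apply: disjointWl (subsetIl _ _) _; apply: disjointWr (subsetIl _ _) _.
    exact: Qd.
  - apply/setP => x; apply/bigcupP/idP.
      by move=> [i _ /setIP [_ ->]].
    move=> xE; have : x \in E :|: D by rewrite in_setU xE.
    by rewrite -Qc => /bigcupP [i _ xQ]; exists i => //; rewrite in_setI xQ xE.
  - by move=> i; case: (Pgood i).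
  - by move=> i; case: (Pgood i).
rewrite /pvalue; congr opseq; apply: eq_map => i /=.
rewrite [in RHS](Qsplit i); apply: esym; apply: val_ext dDE _ _ _.
- exact: subsetIr.
- exact: subsetIr.
- by case: (Pgood i).
Qed.

Theorem mainTheorem1 (R : realType) (T : finType) (k : nat)
    (E D : {set T}) (Ind : 'I_k -> {set T} -> bool) (w : 'I_k -> T -> R)
    (o1 o2 : Op) :
  (forall i, is_matroid E (Ind i)) ->
  (forall i e, e \in E -> 0 <= w i e) ->
  (#|E| <= \sum_(i < k) mrank (Ind i))%N ->
  [disjoint D & E] ->
  #|D| = (\sum_(i < k) mrank (Ind i) - #|E|)%N ->
  forall v : R,
    is_min_value o1 o2 E Ind w v <->
    is_min_value o1 o2 (E :|: D) (ext_ind D Ind) (ext_weight o2 E D w) v.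
Proof.
move=> Hm _ cEle dDE cD v; split.
- move=> [[P Pf Pv] Pmin]; split.
    have [Q Qf Qv] := fwd w o1 o2 Hm dDE cD Pf.
    by exists Q => //; rewrite Qv.
  move=> Q Qf; have [P1 P1f P1v] := bwd w o1 o2 Hm cEle dDE cD Qf.
  by rewrite -P1v; apply: Pmin.
- move=> [[Q Qf Qv] Qmin]; split.
    have [P Pf Pv] := bwd w o1 o2 Hm cEle dDE cD Qf.
    by exists P => //; rewrite Pv.
  move=> P Pf; have [Q1 Q1f Q1v] := fwd w o1 o2 Hm dDE cD Pf.
  by rewrite -Q1v; apply: Qmin.
Qed.
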